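(* Let $N \ge 2$, let $0 \le z_1 < z_2 < \dots < z_N < 1$, let $\alpha_1, \dots, \alpha_N > 0$ with $\sum_{i=1}^N \alpha_i = 1$, and let $\mu = \sum_{i=1}^N \alpha_i \delta_{z_i}$ on $\mathcal I = [0,1]$. Then the $\mu$-energy form $\mathcal E(f,g) = \langle \nabla^{\mu} f, \nabla^{\mu} g\rangle_\mu$, defined for $f,g \in \mathscr D^1_\mu$, is a Dirichlet form on $L^2_\mu$ (i.e. it is a symmetric, non-negative, closed bilinear form with the Markov property: for every $f$ in its domain, $\hat f = \min(\max(f,0),1)$ is in the domain and $\mathcal E(\hat f,\hat f) \le \mathcal E(f,f)$).
   Context: $\delta_z$ denotes the Dirac measure at $z$. $L^2_\mu$ is the space of ($\mu$-a.e. equivalence classes of) real-valued square-integrable functions on $[0,1]$ with inner product $\langle f,g\rangle_\mu = \sum_{i=1}^N \alpha_i f(z_i) g(z_i)$. The set of $\mu$-differentiable functions with periodic boundary conditions is $\mathscr D^1_\mu = \{ f : [0,1]\to\mathbb R \text{ square-integrable w.r.t. } \mu : \exists f' \in L^2_\mu \text{ with } f(0)=f(1) \text{ and } f(x) = f(0) + \int \mathbf 1_{[0,x)} f' \, d\mu \text{ for all } x \in [0,1]\}$, where $[0,0)=\emptyset$; $f'$ is unique in $L^2_\mu$ and the $\mu$-derivative is $\nabla^\mu f := f'$. Equivalently $f(x) = f(0) + \sum_{i: z_i < x} \alpha_i \nabla^\mu f(z_i)$. Every class in $L^2_\mu$ has a representative in $\mathscr D^1_\mu$, and $\mathscr D^1_\mu$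 is identified with $L^2_\mu$ in this way. Explicitly, $\nabla^\mu f(z_n) = (f(z_{n+1}) - f(z_n))/\alpha_n$ for $n \in \{1,\dots,N-1\}$ and $\nabla^\mu f(z_N) = (f(z_1) - f(z_N))/\alpha_N$. *)

(* Defs.v *)
From Stdlib Require Import ClassicalEpsilon.
From mathcomp Require Import all_boot all_order all_algebra.
From mathcomp Require Import reals.
Set Implicit Arguments. Unset Strict Implicit. Unset Printing Implicit Defensive.
Import Order.TTheory GRing.Theory Num.Theory.
Local Open Scope ring_scope.

(* The measure mu = \sum_i alpha_i delta_{z_i} on [0,1] is encoded by the
   atoms z : 'I_N -> R and the weights alpha : 'I_N -> R.
   Functions on [0,1] are represented as f : R -> R (values outside [0,1]
   are irrelevant).  An element of L^2_mu (a mu-a.e. class) is determined by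
   its values at the atoms; the mu-derivative f' in L^2_mu is therefore
   represented by its values f' i = f'(z_i), i.e. by f' : 'I_N -> R. *)

Section MuCalculus.
Variable R : realType.
Variable N : nat.
Variables (z alpha : 'I_N -> R).

Definition mu_inner (f g : R -> R) : R := \sum_(i < N) alpha i * f (z i) * g (z i).

(* f' is a mu-derivative of f:
   f(0) = f(1) and f(x) = f(0) + \int 1_{[0,x)} f' dmu for all x in [0,1],
   where \int 1_{[0,x)} f' dmu = \sum_{i : z_i < x} alpha_i f'(z_i)
   (all z_i are >= 0). *)
Definition is_mu_deriv (f : R -> R) (f' : 'I_N -> R) : Prop :=
  f 0 = f 1 /\
  forall x : R, 0 <= x <= 1 ->
    f x = f 0 + \sum_(i < N | z i < x) alpha i * f' i.

Definition D1_mu (f : R -> R) : Prop := exists f' : 'I_N -> R, is_mu_deriv f f'.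

(* nabla^mu f : a (chosen) mu-derivative of f (unique in L^2_mu when it exists) *)
Definition mu_grad (f : R -> R) : 'I_N -> R :=
  epsilon (inhabits (fun _ : 'I_N => 0 : R)) (is_mu_deriv f).

Definition mu_energy (f g : R -> R) : R :=
  \sum_(i < N) alpha i * mu_grad f i * mu_grad g i.

End MuCalculus.

Definition lin_comb (R : realType) (a : R) (f g : R -> R) : R -> R :=
  fun x => a * f x + g x.

Definition clip01 (R : realType) (f : R -> R) : R -> R :=
  fun x => Num.min (Num.max (f x) 0) 1.

Definition is_dirichlet_form (R : realType)
  (ip : (R -> R) -> (R -> R) -> R)
  (dom : (R -> R) -> Prop)
  (E : (R -> R) -> (R -> R) -> R) : Prop :=
  dom (fun _ => 0) /\
  (forall a f g, dom f -> dom g -> dom (lin_comb a f g)) /\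
  (* bilinear (linear in the first argument; with symmetry, in both) *)
  (forall a f g h, dom f -> dom g -> dom h ->
     E (lin_comb a f g) h = a * E f h + E g h) /\
  (forall f g, dom f -> dom g -> E f g = E g f) /\
  (forall f, dom f -> 0 <= E f f) /\
  (* closed: the domain is complete for E_1(u) = E(u,u) + <u,u> *)
  (forall u : nat -> R -> R, (forall n, dom (u n)) ->
     (forall e : R, 0 < e -> exists M : nat, forall n m : nat, (M <= n)%N -> (M <= m)%N ->
        E (lin_comb (-1) (u m) (u n)) (lin_comb (-1) (u m) (u n))
        + ip (lin_comb (-1) (u m) (u n)) (lin_comb (-1) (u m) (u n)) < e) ->
     exists f, dom f /\
     (forall e : R, 0 < e -> exists M : nat, forall n : nat, (M <= n)%N ->
        E (lin_comb (-1) f (u n)) (lin_comb (-1) f (u n))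
        + ip (lin_comb (-1) f (u n)) (lin_comb (-1) f (u n)) < e)) /\
  (forall f, dom f -> dom (clip01 f) /\ E (clip01 f) (clip01 f) <= E f f).

(* Main.v *)
Require Import Defs.
From Stdlib Require Import ClassicalEpsilon.
From mathcomp Require Import all_boot all_order all_algebra.
From mathcomp Require Import reals.
From mathcomp Require Import all_classical all_reals all_analysis.
From mathcomp Require Import ring lra.
Import Order.TTheory GRing.Theory Num.Theory.
Import numFieldNormedType.Exports.
Set Implicit Arguments. Unset Strict Implicit. Unset Printing Implicit Defensive.
Local Open Scope classical_set_scope.
Local Open Scope ring_scope.

Lemma zlt_iff (R : realType) (N : nat) (z : 'I_N -> R)
  (Hz : forall i j : 'I_N, (i < j)%N -> z i < z j) (i j : 'I_N) :
  (z j < z i) = (j < i)%N.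
Proof.
case: (ltngtP j i) => h.
- exact: Hz.
- by apply/negbTE; rewrite -leNgt ltW // Hz.
- by have -> : j = i by apply: val_inj.
Qed.

Lemma sum_split_le (R : realType) (N : nat) (F : 'I_N -> R) (i : 'I_N) :
  \sum_(j < N | (j <= i)%N) F j = \sum_(j < N | (j < i)%N) F j + F i.
Proof.
rewrite (bigD1 i) //= addrC; congr (_ + _).
apply: eq_bigl => j; rewrite ltn_neqAle andbC; congr (_ && _).
Qed.

Definition xnext (R : realType) (N : nat) (z : 'I_N -> R) (i : 'I_N) : R :=
  if insub (i.+1) is Some j then z j else 1.

Lemma xnext_iff (R : realType) (N : nat) (z : 'I_N -> R)
  (Hz : forall i j : 'I_N, (i < j)%N -> z i < z j)
  (Hz01 : forall i : 'I_N, 0 <= z i /\ z i < 1) (i j : 'I_N) :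
  (z j < xnext z i) = (j <= i)%N.
Proof.
rewrite /xnext; case: insubP => [k _ kE|h].
- by rewrite zlt_iff // kE ltnS.
- have -> : (j <= i)%N.
    by rewrite -ltnS; apply: leq_trans (ltn_ord j) _; rewrite leqNgt.
  by case: (Hz01 j).
Qed.

Lemma xnext_01 (R : realType) (N : nat) (z : 'I_N -> R)
  (Hz01 : forall i : 'I_N, 0 <= z i /\ z i < 1) (i : 'I_N) :
  0 <= xnext z i <= 1.
Proof.
rewrite /xnext; case: insubP => [k _ _|_]; last by rewrite ler01 lexx.
by case: (Hz01 k) => h1 h2; rewrite h1 ltW.
Qed.

Lemma sum_zlt (R : realType) (N : nat) (z : 'I_N -> R)
  (Hz : forall i j : 'I_N, (i < j)%N -> z i < z j) (F : 'I_N -> R) (i : 'I_N) :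
  \sum_(j < N | z j < z i) F j = \sum_(j < N | (j < i)%N) F j.
Proof. by apply: eq_bigl => j; rewrite zlt_iff. Qed.

Lemma sum_xnext (R : realType) (N : nat) (z : 'I_N -> R)
  (Hz : forall i j : 'I_N, (i < j)%N -> z i < z j)
  (Hz01 : forall i : 'I_N, 0 <= z i /\ z i < 1) (F : 'I_N -> R) (i : 'I_N) :
  \sum_(j < N | z j < xnext z i) F j = \sum_(j < N | (j <= i)%N) F j.
Proof. by apply: eq_bigl => j; rewrite xnext_iff. Qed.

Lemma deriv_at (R : realType) (N : nat) (z alpha : 'I_N -> R)
  (Hz : forall i j : 'I_N, (i < j)%N -> z i < z j)
  (Hz01 : forall i : 'I_N, 0 <= z i /\ z i < 1) f f' (i : 'I_N) :
  is_mu_deriv z alpha f f' -> alpha i * f' i = f (xnext z i) - f (z i).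
Proof.
move=> [_ H].
rewrite (H _ (xnext_01 Hz01 i)).
have [h1 h2] := Hz01 i.
rewrite (H (z i)); last by rewrite h1 ltW.
rewrite sum_xnext // sum_zlt // sum_split_le; lra.
Qed.

Lemma deriv_uniq (R : realType) (N : nat) (z alpha : 'I_N -> R)
  (Hz : forall i j : 'I_N, (i < j)%N -> z i < z j)
  (Hz01 : forall i : 'I_N, 0 <= z i /\ z i < 1)
  (Ha : forall i : 'I_N, 0 < alpha i) f f' g' (i : 'I_N) :
  is_mu_deriv z alpha f f' -> is_mu_deriv z alpha f g' -> f' i = g' i.
Proof.
move=> H1 H2.
have := deriv_at Hz Hz01 i H1; rewrite -(deriv_at Hz Hz01 i H2).
by apply: mulfI; rewrite gt_eqF.
Qed.


Lemma mu_grad_eq (R : realType) (N : nat) (z alpha : 'I_N -> R)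
  (Hz : forall i j : 'I_N, (i < j)%N -> z i < z j)
  (Hz01 : forall i : 'I_N, 0 <= z i /\ z i < 1)
  (Ha : forall i : 'I_N, 0 < alpha i) f f' (i : 'I_N) :
  is_mu_deriv z alpha f f' -> mu_grad z alpha f i = f' i.
Proof.
move=> H; apply: esym; apply: (deriv_uniq Hz Hz01 Ha i H).
rewrite /mu_grad; apply: epsilon_spec; by exists f'.
Qed.

Lemma deriv_lin (R : realType) (N : nat) (z alpha : 'I_N -> R) a f g f' g' :
  is_mu_deriv z alpha f f' -> is_mu_deriv z alpha g g' ->
  is_mu_deriv z alpha (lin_comb a f g) (fun i => a * f' i + g' i).
Proof.
move=> [Hf0 Hf] [Hg0 Hg]; split; first by rewrite /lin_comb Hf0 Hg0.
move=> x hx; rewrite /lin_comb (Hf x hx) (Hg x hx).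
have -> : \sum_(i < N | z i < x) alpha i * (a * f' i + g' i) =
  a * \sum_(i < N | z i < x) alpha i * f' i + \sum_(i < N | z i < x) alpha i * g' i.
  by rewrite mulr_sumr -big_split; apply: eq_bigr => i _; rewrite mulrDr mulrCA.
lra.
Qed.

Lemma deriv_zero (R : realType) (N : nat) (z alpha : 'I_N -> R) :
  is_mu_deriv z alpha (fun _ => 0) (fun _ => 0).
Proof.
split => // x _; rewrite big1 ?addr0 // => i _; by rewrite mulr0.
Qed.

Lemma initseg (N : nat) (P : pred 'I_N) :
  (forall i j : 'I_N, (i < j)%N -> P j -> P i) ->
  exists k, (k <= N)%N /\ forall i : 'I_N, P i = (i < k)%N.
Proof.
move=> Hd; exists (\max_(i | P i) (nat_of_ord i).+1); split.
  by apply/bigmax_leqP => i _; exact: ltn_ord.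
move=> i; apply/idP/idP => [Pi|].
  exact: (@leq_bigmax_cond _ P (fun j : 'I_N => (nat_of_ord j).+1) i Pi).
apply: contraTT => nPi; rewrite -leqNgt; apply/bigmax_leqP => j Pj.
rewrite ltnNge; apply/negP => hij.
move: hij; rewrite leq_eqVlt => /orP[/eqP e|lt].
  have ej : i = j by apply: val_inj.
  by move: nPi; rewrite ej Pj.
by rewrite (Hd _ _ lt Pj) in nPi.
Qed.

Lemma telescope (R : realType) (N : nat) (G : nat -> R) (k : nat) :
  (k <= N)%N ->
  G k = G 0%N + \sum_(j < N | (j < k)%N) (G (nat_of_ord j).+1 - G j).
Proof.
elim: k => [_|k IH hk].
  by rewrite big_pred0 ?addr0 // => j; rewrite ltn0.
have kN : (k < N)%N by [].
rewrite (eq_bigl (fun j : 'I_N => (j <= Ordinal kN)%N)); last by move=> j; rewrite ltnS.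
rewrite sum_split_le.
have -> : \sum_(j < N | (j < Ordinal kN)%N) (G (nat_of_ord j).+1 - G j) =
  \sum_(j < N | (j < k)%N) (G (nat_of_ord j).+1 - G j) by [].
rewrite addrA -(IH (ltnW hk)) /=; lra.
Qed.
Lemma sq_le (R : realType) (d e : R) : `|d| <= `|e| -> d * d <= e * e.
Proof.
move=> h.
have h1 : d * d = `|d| * `|d| by rewrite -normrM ger0_norm // -expr2 sqr_ge0.
have h2 : e * e = `|e| * `|e| by rewrite -normrM ger0_norm // -expr2 sqr_ge0.
rewrite h1 h2; apply: ler_pM => //.
Qed.
Lemma clip_lip (R : realType) (a b : R) :
  `|Num.min (Num.max a 0) 1 - Num.min (Num.max b 0) 1| <= `|a - b|.
Proof.
have h1 : a - b <= `|a - b| by apply: ler_norm.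
have h2 : b - a <= `|a - b| by rewrite distrC; apply: ler_norm.
rewrite !maxEle; have [ha|ha] := leP a 0; have [hb|hb] := leP b 0;
rewrite !minEle ?ler01; have [ha1|ha1] := leP a 1; have [hb1|hb1] := leP b 1;
rewrite ler_norml; apply/andP; split; lra.
Qed.

Definition Spart (R : realType) (N : nat) (alpha : 'I_N -> R) (f : R -> R) (f' : 'I_N -> R) (m : nat) : R :=
  f 0 + \sum_(i < N | (i < m)%N) alpha i * f' i.

Lemma Spart_step (R : realType) (N : nat) (alpha : 'I_N -> R) f f' (j : 'I_N) :
  Spart alpha f f' (nat_of_ord j).+1 = Spart alpha f f' j + alpha j * f' j.
Proof.
rewrite /Spart (eq_bigl (fun i : 'I_N => (i <= j)%N)); last by move=> i; rewrite ltnS.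
rewrite sum_split_le; lra.
Qed.

Definition comp_deriv (R : realType) (N : nat) (alpha : 'I_N -> R) (phi : R -> R) f f' : 'I_N -> R :=
  fun j => (phi (Spart alpha f f' (nat_of_ord j).+1) - phi (Spart alpha f f' j)) / alpha j.

Lemma deriv_comp (R : realType) (N : nat) (z alpha : 'I_N -> R)
  (Hz : forall i j : 'I_N, (i < j)%N -> z i < z j)
  (Ha : forall i : 'I_N, 0 < alpha i) (phi : R -> R) f f' :
  is_mu_deriv z alpha f f' ->
  is_mu_deriv z alpha (fun x => phi (f x)) (comp_deriv alpha phi f f').
Proof.
move=> [Hf0 Hf]; split; first by rewrite Hf0.
move=> x hx.
have [k [kN Hk]] := initseg (P := fun i : 'I_N => z i < x)
  (fun i j hij hj => lt_trans (Hz _ _ hij) hj).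
have fx : f x = Spart alpha f f' k.
  by rewrite (Hf x hx) /Spart; congr (_ + _); apply: eq_bigl => i; rewrite Hk.
have S0 : Spart alpha f f' 0 = f 0.
  by rewrite /Spart big_pred0 ?addr0 // => i; rewrite ltn0.
rewrite fx (telescope (fun m => phi (Spart alpha f f' m)) kN) /= S0; congr (_ + _).
apply: eq_big => [i|i _]; first by rewrite Hk.
by rewrite /comp_deriv mulrC divfK // gt_eqF.
Qed.

Lemma energy_comp (R : realType) (N : nat) (alpha : 'I_N -> R)
  (Ha : forall i : 'I_N, 0 < alpha i) (phi : R -> R) f f' :
  (forall a b, `|phi a - phi b| <= `|a - b|) ->
  \sum_(i < N) alpha i * comp_deriv alpha phi f f' i * comp_deriv alpha phi f f' i
  <= \sum_(i < N) alpha i * f' i * f' i.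
Proof.
move=> Hl; apply: ler_sum => j _; rewrite /comp_deriv.
set d := _ - _.
have hd : d * d <= (alpha j * f' j) * (alpha j * f' j).
  apply: sq_le; rewrite /d; apply: le_trans (Hl _ _) _.
  by rewrite Spart_step addrAC subrr add0r.
have aj := Ha j; have anz : alpha j != 0 by rewrite gt_eqF.
have -> : alpha j * (d / alpha j) * (d / alpha j) = (d * d) / alpha j by field.
have -> : alpha j * f' j * f' j = (alpha j * f' j) * (alpha j * f' j) / alpha j by field.
by apply: ler_wpM2r => //; rewrite invr_ge0 ltW.
Qed.

Lemma seq_cauchy_cvg (R : realType) (a : nat -> R) :
  (forall e : R, 0 < e -> exists M : nat, forall n m : nat, (M <= n)%N -> (M <= m)%N -> `|a n - a m| < e) ->
  a @ \oo --> lim (a @ \oo).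
Proof.
move=> H; apply: cauchy_cvg; apply: cauchy_exP => e e0.
have [M HM] := H e e0; exists (a M), M => // m hm.
rewrite -ball_normE /ball_ /=; exact: HM.
Qed.

Lemma cvg0_eps (R : realType) (h : nat -> R) :
  h @ \oo --> 0 -> forall e : R, 0 < e -> exists M : nat, forall n, (M <= n)%N -> h n < e.
Proof.
move/cvgr0Pnorm_lt => H e e0; have [M _ HM] := H e e0; exists M => n hn.
exact: le_lt_trans (ler_norm _) (HM n hn).
Qed.

Lemma cvgD' (R : realType) (a b : nat -> R) (x y : R) :
  a @ \oo --> x -> b @ \oo --> y -> (fun n => a n + b n) @ \oo --> x + y.
Proof. exact: cvgD. Qed.

Lemma cvgM' (R : realType) (a b : nat -> R) (x y : R) :
  a @ \oo --> x -> b @ \oo --> y -> (fun n => a n * b n) @ \oo --> x * y.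
Proof. exact: cvgM. Qed.

Lemma cvgC' (R : realType) (x : R) : (fun n : nat => x) @ \oo --> x.
Proof. exact: cvg_cst. Qed.

Lemma sum_cvg (R : realType) (N : nat) (P : pred 'I_N) (F : 'I_N -> nat -> R) (l : 'I_N -> R) :
  (forall i, F i @ \oo --> l i) ->
  (fun n => \sum_(i < N | P i) F i n) @ \oo --> \sum_(i < N | P i) l i.
Proof.
move=> H.
apply: (@cvg_big R 'I_N +%R 0 P (@add_continuous R) nat \oo (index_enum _) F l _ (fun i _ => H i)).
Qed.

Lemma wsq_ge0 (R : realType) (a x : R) : 0 < a -> 0 <= a * x * x.
Proof. move=> a0; rewrite -mulrA; apply: mulr_ge0; [exact: ltW | rewrite -expr2; exact: sqr_ge0]. Qed.

Lemma term_le_sum (R : realType) (N : nat) (F : 'I_N -> R) (i : 'I_N) :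
  (forall j, 0 <= F j) -> F i <= \sum_(j < N) F j.
Proof.
move=> H; rewrite (bigD1 i) //= lerDl; exact: sumr_ge0.
Qed.

Lemma sq_lt (R : realType) (a D e : R) : 0 < a -> 0 < e -> a * D * D < a * e * e -> `|D| < e.
Proof.
move=> a0 e0 h; rewrite ltNge; apply/negP => he.
have : e * e <= D * D by apply: sq_le; rewrite gtr0_norm.
move: h; rewrite -!mulrA ltr_pM2l // => h1 h2.
by move: (lt_le_trans h1 h2); rewrite ltxx.
Qed.

Lemma un_zi (R : realType) (N : nat) (z alpha : 'I_N -> R)
  (Hz : forall i j : 'I_N, (i < j)%N -> z i < z j)
  (Hz01 : forall i : 'I_N, 0 <= z i /\ z i < 1) (i0 : 'I_N) (i0E : nat_of_ord i0 = 0%N)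
  g g' (i : 'I_N) :
  is_mu_deriv z alpha g g' ->
  g (z i) = g (z i0) + \sum_(j < N | (j < i)%N) alpha j * g' j.
Proof.
move=> [_ H].
have [h1 h2] := Hz01 i; have [h3 h4] := Hz01 i0.
rewrite (H (z i)); last by rewrite h1 ltW.
rewrite (H (z i0)); last by rewrite h3 ltW.
rewrite !sum_zlt // [X in _ = _ + X + _]big_pred0 ?addr0 // => j.
by rewrite i0E ltn0.
Qed.

Lemma closed_part (R : realType) (N : nat) (z alpha : 'I_N -> R)
  (Hz : forall i j : 'I_N, (i < j)%N -> z i < z j)
  (Hz01 : forall i : 'I_N, 0 <= z i /\ z i < 1)
  (Ha : forall i : 'I_N, 0 < alpha i) (i0 : 'I_N) (i0E : nat_of_ord i0 = 0%N)
  (u : nat -> R -> R) :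
  (forall n, D1_mu z alpha (u n)) ->
  (forall e : R, 0 < e -> exists M : nat, forall n m : nat, (M <= n)%N -> (M <= m)%N ->
        mu_energy z alpha (lin_comb (-1) (u m) (u n)) (lin_comb (-1) (u m) (u n))
        + mu_inner z alpha (lin_comb (-1) (u m) (u n)) (lin_comb (-1) (u m) (u n)) < e) ->
  exists f, D1_mu z alpha f /\
     (forall e : R, 0 < e -> exists M : nat, forall n : nat, (M <= n)%N ->
        mu_energy z alpha (lin_comb (-1) f (u n)) (lin_comb (-1) f (u n))
        + mu_inner z alpha (lin_comb (-1) f (u n)) (lin_comb (-1) f (u n)) < e).
Proof.
move=> Hdom HC.
pose d n := mu_grad z alpha (u n).
have Hd n : is_mu_deriv z alpha (u n) (d n).
  by rewrite /d /mu_grad; apply: epsilon_spec; apply: Hdom.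
have E1 n m : mu_energy z alpha (lin_comb (-1) (u m) (u n)) (lin_comb (-1) (u m) (u n))
        + mu_inner z alpha (lin_comb (-1) (u m) (u n)) (lin_comb (-1) (u m) (u n)) =
   \sum_(i < N) alpha i * (-1 * d m i + d n i) * (-1 * d m i + d n i)
   + \sum_(i < N) alpha i * (-1 * u m (z i) + u n (z i)) * (-1 * u m (z i) + u n (z i)).
  congr (_ + _); apply: eq_bigr => i _.
  by rewrite !(mu_grad_eq Hz Hz01 Ha i (deriv_lin (-1) (Hd m) (Hd n))).
have ip_ge0 n m : 0 <= \sum_(i < N) alpha i * (-1 * u m (z i) + u n (z i)) * (-1 * u m (z i) + u n (z i)).
  by apply: sumr_ge0 => i _; apply: wsq_ge0.
have en_ge0 n m : 0 <= \sum_(i < N) alpha i * (-1 * d m i + d n i) * (-1 * d m i + d n i).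
  by apply: sumr_ge0 => i _; apply: wsq_ge0.
have Cd i : d^~ i @ \oo --> lim (d^~ i @ \oo).
  apply: seq_cauchy_cvg => e e0.
  have [M HM] := HC (alpha i * e * e) (mulr_gt0 (mulr_gt0 (Ha i) e0) e0).
  exists M => n m hn hm.
  have := HM n m hn hm; rewrite E1 => h.
  have : alpha i * (-1 * d m i + d n i) * (-1 * d m i + d n i) < alpha i * e * e.
    apply: (le_lt_trans _ h).
    have ht := @term_le_sum R N (fun j => alpha j * (-1 * d m j + d n j) * (-1 * d m j + d n j)) i (fun j => wsq_ge0 _ (Ha j)).
    apply: (le_trans ht); by rewrite lerDl.
  move/(sq_lt (Ha i) e0); congr (`| _ | < _); lra.
have Cu : (fun n => u n (z i0)) @ \oo --> lim ((fun n => u n (z i0)) @ \oo).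
  apply: seq_cauchy_cvg => e e0.
  have [M HM] := HC (alpha i0 * e * e) (mulr_gt0 (mulr_gt0 (Ha i0) e0) e0).
  exists M => n m hn hm.
  have := HM n m hn hm; rewrite E1 => h.
  have : alpha i0 * (-1 * u m (z i0) + u n (z i0)) * (-1 * u m (z i0) + u n (z i0)) < alpha i0 * e * e.
    apply: (le_lt_trans _ h).
    have ht := @term_le_sum R N (fun j => alpha j * (-1 * u m (z j) + u n (z j)) * (-1 * u m (z j) + u n (z j))) i0 (fun j => wsq_ge0 _ (Ha j)).
    apply: (le_trans ht); by rewrite lerDr.
  move/(sq_lt (Ha i0) e0); congr (`| _ | < _); lra.
set dl := fun i => lim (d^~ i @ \oo).
set c := lim ((fun n => u n (z i0)) @ \oo).
have Cd' i : d^~ i @ \oo --> dl i := Cd i.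
have full (F : 'I_N -> R) : \sum_(j < N | z j < 1) F j = \sum_(j < N) F j.
  by apply: eq_bigl => j; case: (Hz01 j) => _ ->.
have sum0 n : \sum_(j < N) alpha j * d n j = 0.
  case: (Hd n) => H0 H; have := H 1; rewrite ler01 lexx -H0 full => /(_ isT) h; lra.
have suml : \sum_(j < N) alpha j * dl j = 0.
  have L := @sum_cvg R N xpredT (fun i n => alpha i * d n i) (fun i => alpha i * dl i)
    (fun i => cvgM' (@cvgC' R _) (Cd' i)).
  have eqf : (fun n => \sum_(i < N | xpredT i) alpha i * d n i) = fun _ => 0.
    by apply: funext => n; exact: sum0 n.
  rewrite eqf in L.
  exact: (cvg_unique (@Rhausdorff R) L (@cvgC' R 0)).
pose f x := c + \sum_(j < N | z j < x) alpha j * dl j.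
have f0 : f 0 = c.
  rewrite /f big_pred0 ?addr0 // => j; case: (Hz01 j) => h _; by rewrite ltNge h.
have Df : is_mu_deriv z alpha f dl.
  split; first by rewrite f0 /f full suml addr0.
  by move=> x hx; rewrite f0.
exists f; split; first by exists dl.
pose h n := \sum_(i < N) alpha i * (-1 * dl i + d n i) * (-1 * dl i + d n i)
   + \sum_(i < N) alpha i * (-1 * f (z i) + u n (z i)) * (-1 * f (z i) + u n (z i)).
have Eh n : mu_energy z alpha (lin_comb (-1) f (u n)) (lin_comb (-1) f (u n))
        + mu_inner z alpha (lin_comb (-1) f (u n)) (lin_comb (-1) f (u n)) = h n.
  congr (_ + _); apply: eq_bigr => i _.
  by rewrite !(mu_grad_eq Hz Hz01 Ha i (deriv_lin (-1) Df (Hd n))).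
have Cuz i : (fun n => u n (z i)) @ \oo --> f (z i).
  have -> : (fun n => u n (z i)) = fun n => u n (z i0) + \sum_(j < N | (j < i)%N) alpha j * d n j.
    by apply: funext => n; exact: (un_zi Hz Hz01 i0E i (Hd n)).
  rewrite /f sum_zlt //.
  apply: cvgD' => //.
  exact: (@sum_cvg R N (fun j : 'I_N => (j < i)%N) (fun j n => alpha j * d n j) (fun j => alpha j * dl j)
    (fun j => cvgM' (@cvgC' R _) (Cd' j))).
have Ch : h @ \oo --> 0.
  have T1 := @sum_cvg R N xpredT (fun i n => alpha i * (-1 * dl i + d n i) * (-1 * dl i + d n i))
    (fun i => alpha i * (-1 * dl i + dl i) * (-1 * dl i + dl i))
    (fun i => cvgM' (cvgM' (@cvgC' R _) (cvgD' (@cvgC' R _) (Cd' i))) (cvgD' (@cvgC' R _) (Cd' i))).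
  have T2 := @sum_cvg R N xpredT (fun i n => alpha i * (-1 * f (z i) + u n (z i)) * (-1 * f (z i) + u n (z i)))
    (fun i => alpha i * (-1 * f (z i) + f (z i)) * (-1 * f (z i) + f (z i)))
    (fun i => cvgM' (cvgM' (@cvgC' R _) (cvgD' (@cvgC' R _) (Cuz i))) (cvgD' (@cvgC' R _) (Cuz i))).
  have := cvgD' T1 T2.
  rewrite !big1 ?addr0 //; by move=> i _; rewrite mulN1r addNr ?mulr0 ?mul0r.
move=> e e0; have [M HM] := cvg0_eps Ch e0; exists M => n hn; rewrite Eh; exact: HM.
Qed.

Theorem theorem2p1 (R : realType) (N : nat) (z alpha : 'I_N -> R) :
  (2 <= N)%N ->
  (forall i j : 'I_N, (i < j)%N -> z i < z j) ->
  (forall i : 'I_N, 0 <= z i /\ z i < 1) ->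
  (forall i : 'I_N, 0 < alpha i) ->
  \sum_(i < N) alpha i = 1 ->
  is_dirichlet_form (mu_inner z alpha) (D1_mu z alpha) (mu_energy z alpha).
Proof.
move=> HN Hz Hz01 Ha _.
have N0 : (0 < N)%N by apply: leq_trans HN.
pose i0 : 'I_N := Ordinal N0.
split; first by exists (fun _ => 0); exact: deriv_zero.
split; first by move=> a f g [f' Hf] [g' Hg]; exists (fun i => a * f' i + g' i); exact: deriv_lin.
split.
  move=> a f g h [f' Hf] [g' Hg] [h' Hh]; rewrite /mu_energy mulr_sumr -big_split.
  apply: eq_bigr => i _.
  rewrite (mu_grad_eq Hz Hz01 Ha i (deriv_lin a Hf Hg)) (mu_grad_eq Hz Hz01 Ha i Hf)
    (mu_grad_eq Hz Hz01 Ha i Hg) (mu_grad_eq Hz Hz01 Ha i Hh) /=; ring.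
split.
  move=> f g _ _; rewrite /mu_energy; apply: eq_bigr => i _; ring.
split.
  move=> f _; rewrite /mu_energy; apply: sumr_ge0 => i _; exact: wsq_ge0.
split.
  move=> u Hdom HC; exact: (closed_part Hz Hz01 Ha (i0 := i0) erefl Hdom HC).
move=> f [f' Hf].
pose phi := fun t : R => Num.min (Num.max t 0) 1.
have Hc := deriv_comp Hz Ha phi Hf.
change (clip01 f) with (fun x => phi (f x)).
split; first by exists (comp_deriv alpha phi f f'); exact: Hc.
rewrite /mu_energy.
rewrite (eq_bigr (fun i => alpha i * comp_deriv alpha phi f f' i * comp_deriv alpha phi f f' i));
  last by move=> i _; rewrite (mu_grad_eq Hz Hz01 Ha i Hc).
rewrite [X in _ <= X](eq_bigr (fun i => alpha i * f' i * f' i));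
  last by move=> i _; rewrite (mu_grad_eq Hz Hz01 Ha i Hf).
apply: energy_comp => // a b; exact: clip_lip.
Qed.
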